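(* In the setting below, let $H^1$ denote the first cohomology of the complex $C^\bullet$. There is a functorial short exact sequence $$0\to D_K/F^0\to H^1\to (T^{-1}/NT^0)\otimes\mathbb{Q}_p\to 0,$$ where the first map sends $c$ to the class of $(0,0,c)$ and the second sends the class of any cocycle of the form $(0,y,c)$ (every class has such a representative, and then $y\in T^{-1}\otimes\mathbb{Q}_p\subset D^{-1}$ modulo components of other slopes that are coboundaries) to the class of the $D^{-1}$-component of $y$. Moreover there is a well-defined functorial map $H^1\to D_K/(F^0+T^0\otimes\mathbb{Q}_p)$ sending a class to the image of $c$ for any representative $(0,y,c)$, and its composition with $D_K/F^0\to H^1$ is the natural projection $D_K/F^0\to D_K/(F^0+T^0\otimes\mathbb{Q}_p)$.
   Context: Let $K$ be a finite extension of $\mathbb{Q}_p$, $K_0$ its maximal unramified subfield, $\sigma$ the Frobenius of $K_0$. Let $T^i$ ($i\in\mathbb{Z}$, finitely many nonzero) be finitely generated free abelian groups with $\mathbb{Z}$-linear maps $N:T^i\to T^{i-1}$ such that $N\otimes\mathbb{Q}:T^0\otimes\mathbb{Q}\to T^{-1}\otimes\mathbb{Q}$ is injective. Let $D=\bigoplus_i D^i$, $D^i=T^i\otimes_{\mathbb{Z}}K_0$, with $\sigma$-semilinear Frobenius $\varphi$ acting on $D^i$ as $p^i(1\otimes\sigma)$ and $K_0$-linear monodromy $N=N\otimes1:D^i\to D^{i-1}$ (so $N\varphi=p\varphi N$). Let $D_K=D\otimes_{K_0}K$ with a decreasing filtration $F^\bullet$; $T^0\otimes\mathbb{Q}_p\subset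 D^0\subset D_K$. (This models $D=D_{st}(V)$, $D_K=D_{dR}(V)$ for $V=H^k_{\text{ét}}(X_{\bar K},\mathbb{Q}_p(r))$ with $X$ totally degenerate, $T^i=T^{k-2r-2i}_{i+r}$.) The complex $C^\bullet$ is $$D\xrightarrow{x\mapsto(\varphi x-x,\;Nx,\;-x\bmod F^0)}D\oplus D\oplus D_K/F^0\xrightarrow{(a,b,c)\mapsto Na+b-p\varphi b}D,$$ in degrees $0,1,2$; its $H^1$ is the semi-stable cohomology $H^1_{st}(K,V)$. *)

(* Defs.v *)
(* Abstract model of the semi-stable complex of a
   "totally degenerate" filtered (phi,N)-module. *)
From HB Require Import structures.
From mathcomp Require Import all_boot all_order all_algebra.
Import GRing.Theory.
Set Implicit Arguments.
Unset Strict Implicit.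
Unset Printing Implicit Defensive.
Local Open Scope ring_scope.

Section PhiN.

(* K0 : the unramified field, sigma : its Frobenius, K : the field K with
   the embedding iota : K0 -> K, p : the prime. *)
Variables (K0 K : fieldType) (sigma : {rmorphism K0 -> K0})
          (iota : {rmorphism K0 -> K}) (p : nat).

(* Data (T^i, N, F^0): T^i = Z^(rk i) (free of finite rank, finitely many
   nonzero), N : T^(i+1) -> T^i given by the integer matrix Nm i acting on
   row vectors, and F0 the step F^0 of the filtration on D_K, a K-subspace
   of D_K = (+)_i K^(rk i). *)
Record datum := Datum {
  rk : int -> nat;
  Nm : forall i : int, 'M[int]_(rk (i + 1), rk i);
  F0 : (forall i : int, 'rV[K]_(rk i)) -> Prop;
  rk_fin : exists s : seq int, forall i, i \notin s -> rk i = 0%N;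
  N_inj : forall v : 'rV[rat]_(rk 0),
            v *m map_mx (fun z : int => z%:~R) (Nm (-1)) = 0 -> v = 0;
  F0_0 : F0 (fun i => 0);
  F0_D : forall f g, F0 f -> F0 g -> F0 (fun i => f i + g i);
  F0_Z : forall (k : K) f, F0 f -> F0 (fun i => k *: f i)
}.

Variable d : datum.

(* D = (+)_i T^i (x) K0 and D_K = D (x)_{K0} K *)
Definition Dsp := forall i : int, 'rV[K0]_(rk d i).
Definition DKsp := forall i : int, 'rV[K]_(rk d i).

Definition phiD (x : Dsp) : Dsp :=
  fun i => ((p%:R : K0) ^ i) *: map_mx sigma (x i).
Definition ND (x : Dsp) : Dsp :=
  fun i => x (i + 1) *m map_mx (fun z : int => z%:~R) (Nm d i).
Definition toK (x : Dsp) : DKsp := fun i => map_mx iota (x i).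

(* Q_p = fixed field of the Frobenius sigma; a row with entries in Q_p is an
   element of T^i (x) Q_p. *)
Definition Qp_row n (v : 'rV[K0]_n) : Prop := map_mx sigma v = v.

(* degree-1 cochains: D (+) D (+) D_K/F^0, represented by (a, b, c) with
   c in D_K (taken modulo F^0 through the relation [cohom]). *)
Definition cochain1 := (Dsp * Dsp * DKsp)%type.

Definition cocycle (z : cochain1) : Prop :=
  forall i, ND z.1.1 i + z.1.2 i - (p%:R : K0) *: phiD z.1.2 i = 0.

(* z and z' define the same class in H^1 : z - z' is d^0 x modulo (0,0,F^0),
   with d^0 x = (phi x - x, N x, - x mod F^0). *)
Definition cohom (z z' : cochain1) : Prop :=
  exists (x : Dsp) (f : DKsp), F0 (d:=d) f /\
    forall i, [/\ z.1.1 i - z'.1.1 i = phiD x i - x i,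
                  z.1.2 i - z'.1.2 i = ND x i &
                  z.2 i - z'.2 i = f i - toK x i].

Definition zeroD : Dsp := fun i => 0.

End PhiN.

Section Morph.
Variables (K0 K : fieldType).

Record dmorph (d d' : datum K) := DMorph {
  Mm : forall i : int, 'M[int]_(rk d i, rk d' i);
  Mm_N : forall i, Nm d i *m Mm i = Mm (i + 1) *m Nm d' i;
  Mm_F0 : forall c, F0 (d:=d) c ->
            F0 (d:=d') (fun i => c i *m map_mx (fun z : int => z%:~R) (Mm i))
}.

Definition mapC (d d' : datum K) (M : dmorph d d')
  (z : cochain1 K0 d) : cochain1 K0 d' :=
  (fun i => z.1.1 i *m map_mx (fun z : int => z%:~R) (Mm M i),
   fun i => z.1.2 i *m map_mx (fun z : int => z%:~R) (Mm M i),
   fun i => z.2 i *m map_mx (fun z : int => z%:~R) (Mm M i)).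

End Morph.

(* Main.v *)
Require Import Defs.
From HB Require Import structures.
From mathcomp Require Import all_boot all_order all_algebra.
From Stdlib Require Import FunctionalExtensionality IndefiniteDescription.
Import GRing.Theory.
Local Open Scope ring_scope.

Lemma intmxM (R : fieldType) m n k (A : 'M[int]_(m,n)) (B : 'M[int]_(n,k)) :
  map_mx (fun z : int => (z%:~R : R)) (A *m B) =
  map_mx (fun z : int => (z%:~R : R)) A *m map_mx (fun z : int => (z%:~R : R)) B.
Proof. exact: (map_mxM (intmul (1:R))). Qed.

Lemma map_mx_int (R S : fieldType) (f : {rmorphism R -> S}) m n (v : 'M[R]_(m,n)) k
  (A : 'M[int]_(n,k)) :
  map_mx f (v *m map_mx (fun z : int => (z%:~R : R)) A) =
  map_mx f v *m map_mx (fun z : int => (z%:~R : S)) A.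
Proof.
rewrite map_mxM; congr (_ *m _); apply/matrixP => i j; by rewrite !mxE rmorph_int.
Qed.

Section Rat.
Variables (F : fieldType) (hchar : [pchar F] =i pred0).

Lemma nz_den (x : rat) : (denq x)%:~R != 0 :> F.
Proof.
move/pcharf0P: hchar => h.
have := denq_gt0 x; case: (denq x) => [[|n]|] //= _.
by rewrite -pmulrn h.
Qed.

Fact ratF_zmod : zmod_morphism (@ratr F).
Proof.
have injZtoQ: @injective rat int intr by apply: intr_inj.
move=> x y.
apply: (canLR (mulfK (nz_den _))); apply: (mulIf (nz_den x)).
rewrite mulrAC mulrBl divfK ?nz_den // mulrAC -!rmorphM.
apply: (mulIf (nz_den y)); rewrite mulrAC mulrBl divfK ?nz_den //.
rewrite -!(rmorphM, rmorphB); congr _%:~R; apply: injZtoQ.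
rewrite !(rmorphM, rmorphB) /= [_ - _]lock /= -lock !numqE.
by rewrite (mulrAC y) -!mulrBl -mulrA mulrAC !mulrA.
Qed.

Fact ratF_monoid : monoid_morphism (@ratr F).
Proof.
have injZtoQ: @injective rat int intr by apply: intr_inj.
split=> [|x y]; first by rewrite /ratr divr1.
rewrite /ratr mulrC mulrAC; apply: canLR (mulKf (nz_den _)) _; rewrite !mulrA.
do 2!apply: canRL (mulfK (nz_den _)) _; rewrite -!rmorphM; congr _%:~R.
apply: injZtoQ; rewrite !rmorphM [x * y]lock /= !numqE -lock.
by rewrite -!mulrA mulrA mulrCA -!mulrA (mulrCA y).
Qed.

Definition ratF : {rmorphism rat -> F} :=
  HB.pack (@ratr F) (GRing.isZmodMorphism.Build _ _ _ ratF_zmod)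
    (GRing.isMonoidMorphism.Build _ _ _ ratF_monoid).

Lemma int_inj_char0 m n (A : 'M[int]_(m,n)) :
  (forall v : 'rV[rat]_m, v *m map_mx (fun z : int => z%:~R) A = 0 -> v = 0) ->
  forall v : 'rV[F]_m, v *m map_mx (fun z : int => z%:~R) A = 0 -> v = 0.
Proof.
move=> hQ v hv.
set AQ := map_mx (fun z : int => (z%:~R : rat)) A.
have fQ : row_free AQ.
  rewrite -kermx_eq0; apply/eqP/row_matrixP => i; rewrite row0.
  by apply: hQ; rewrite -row_mul mulmx_ker row0.
have fF : row_free (map_mx ratF AQ) by rewrite /row_free mxrank_map.
have e : map_mx (fun z : int => z%:~R) A = map_mx ratF AQ.
  by apply/matrixP => i j; rewrite !mxE /= ratr_int.
rewrite e in hv.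
by apply: (row_free_inj fF); rewrite mul0mx -hv.
Qed.
End Rat.

Set Implicit Arguments.
Unset Strict Implicit.

Section Main.
Variables (p : nat) (K0 K : fieldType)
  (sigma : {rmorphism K0 -> K0}) (iota : {rmorphism K0 -> K})
  (hp : prime p) (hchar : [pchar K0] =i pred0)
  (hslope : forall i : int, i != 0 ->
     bijective (fun x : K0 => (p%:R : K0) ^ i * sigma x - x))
  (hcok : forall x : K0, exists a y : K0, sigma a = a /\ x = a + (sigma y - y))
  (hdir : forall a y : K0, sigma a = a -> a = sigma y - y -> a = 0)
  (d : datum K).

Local Notation o := ((fun i => 0) : Dsp K0 d).
Local Notation NmK0 := (map_mx (fun z : int => (z%:~R : K0)) (Nm d (-1))).

Lemma pnz : (p%:R : K0) != 0.
Proof.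
apply/negP => /eqP h; have := hchar p.
by rewrite !inE hp /= h eqxx.
Qed.

Lemma pscale_m1 n (v : 'rV[K0]_n) : (p%:R : K0) *: ((p%:R : K0) ^ (-1) *: v) = v.
Proof. by rewrite scalerA exprN1 mulfV ?pnz // scale1r. Qed.

Lemma pscale_S (i : int) n (v : 'rV[K0]_n) :
  (p%:R : K0) *: ((p%:R : K0) ^ i *: v) = (p%:R : K0) ^ (i + 1) *: v.
Proof. by rewrite scalerA expfzDr ?pnz // expr1z mulrC. Qed.

Lemma fixed_slope (i : int) n (v : 'rV[K0]_n) :
  (p%:R : K0) ^ i *: map_mx sigma v = v -> i != 0 -> v = 0.
Proof.
move=> E hi; case: (hslope hi) => g fg gf.
apply/rowP => j; rewrite mxE.
move/rowP: E => /(_ j); rewrite !mxE => e.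
apply: (can_inj fg) => /=.
by rewrite e subrr rmorph0 mulr0 subr0.
Qed.

Lemma Ninj0 (v : 'rV[K0]_(rk d 0)) : v *m NmK0 = 0 -> v = 0.
Proof. apply: int_inj_char0 => //; exact: N_inj. Qed.

Lemma fixed_x (x : Dsp K0 d) : (forall i, phiD sigma p x i = x i) ->
  (forall i, i != 0 -> x i = 0) /\ Qp_row sigma (x 0).
Proof.
move=> E; split.
  by move=> i hi; apply: (fixed_slope (E i) hi).
by have := E 0; rewrite /phiD expr0z scale1r.
Qed.

Lemma ND_o i : ND o i = 0.
Proof. by rewrite /ND mul0mx. Qed.

Lemma part1 (c : DKsp d) : cocycle sigma p (o, o, c).
Proof. by move=> i /=; rewrite ND_o /phiD map_mx0 !scaler0 !(addr0, subr0). Qed.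

Lemma part2 (c c' : DKsp d) :
  cohom sigma iota p (o, o, c) (o, o, c') <-> F0 (d:=d) (fun i => c i - c' i).
Proof.
split.
  case=> x [f [Ff E]].
  have [xnz x0] : (forall i, i != 0 -> x i = 0) /\ Qp_row sigma (x 0).
    apply: fixed_x => i; have [e _ _] := E i; move: e => /=.
    by rewrite subrr => /eqP; rewrite eq_sym subr_eq0 => /eqP.
  have xz0 : x 0 = 0.
    apply: Ninj0; have [_ e _] := E (-1); move: e => /=; rewrite subrr.
    by move=> ->.
  have xz i : x i = 0 by case: (eqVneq i 0) => [->|/xnz].
  have -> : (fun i => c i - c' i) = f; last by [].
  apply: functional_extensionality_dep => i; have [_ _ ->] := E i.
  by rewrite /toK xz map_mx0 subr0.
move=> Ff; exists o, (fun i => c i - c' i); split=> // i; split=> /=.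
- by rewrite /phiD map_mx0 scaler0 !subrr.
- by rewrite ND_o subrr.
- by rewrite /toK map_mx0 subr0.
Qed.


Lemma zmod_swap (V : zmodType) (a b c e : V) : a - b - (c - e) = (a - c) - (b - e).
Proof. by rewrite !opprB addrACA [RHS]addrACA [- b + _]addrC. Qed.

Lemma ND_m1 (x : Dsp K0 d) : ND x (-1) = x 0 *m NmK0.
Proof. by []. Qed.

Lemma cocycle_m1 (z : cochain1 K0 d) : cocycle sigma p z ->
  z.1.1 0 *m NmK0 = map_mx sigma (z.1.2 (-1)) - z.1.2 (-1).
Proof.
move=> /(_ (-1)); rewrite ND_m1 /phiD pscale_m1 => /eqP.
rewrite -addrA addr_eq0 => /eqP ->; by rewrite opprB.
Qed.

Lemma a0sol (z : cochain1 K0 d) : cocycle sigma p z ->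
  exists v : 'rV[K0]_(rk d 0), map_mx sigma v - v = z.1.1 0.
Proof.
move=> hz.
have [al hal] := @fin_all_exists _ (fun _ => K0)
  (fun j a => exists y : K0, sigma a = a /\ z.1.1 0 0 j = a + (sigma y - y))
  (fun j => hcok (z.1.1 0 0 j)).
have [yf hy] := @fin_all_exists _ (fun _ => K0)
  (fun j y => sigma (al j) = al j /\ z.1.1 0 0 j = al j + (sigma y - y)) hal.
set alr := \row_j al j; set yr := \row_j yf j.
have ea : z.1.1 0 = alr + (map_mx sigma yr - yr).
  by apply/rowP => j; rewrite !mxE; case: (hy j).
have alN : alr *m NmK0 = 0.
  have e := cocycle_m1 hz; rewrite ea mulmxDl in e.
  set w := z.1.2 (-1) - yr *m NmK0.
  have e2 : alr *m NmK0 = map_mx sigma w - w.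
    rewrite -[alr *m NmK0](addrK ((map_mx sigma yr - yr) *m NmK0)) e.
    by rewrite /w map_mxB map_mx_int mulmxBl zmod_swap.
  apply/rowP => j; rewrite mxE.
  have := e2; move/rowP => /(_ j); rewrite !mxE => e3.
  apply: (hdir _ e3).
  have fixal : map_mx sigma alr = alr by apply/rowP => k; rewrite !mxE; case: (hy k).
  have : map_mx sigma (alr *m NmK0) = alr *m NmK0 by rewrite map_mx_int fixal.
  by move/rowP => /(_ j); rewrite !mxE.
have al0 : alr = 0 := Ninj0 alN.
by exists yr; rewrite ea al0 add0r.
Qed.

Definition delta (j : int) (v : 'rV[K0]_(rk d j)) : Dsp K0 d := fun i =>
  match j =P i with ReflectT e => ecast k 'rV[K0]_(rk d k) e v | ReflectF _ => 0 end.

Lemma delta_eq j (v : 'rV[K0]_(rk d j)) : delta v j = v.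
Proof.
rewrite /delta; case: (j =P j) => // e.
by rewrite (eq_irrelevance e erefl).
Qed.

Lemma delta_neq j (v : 'rV[K0]_(rk d j)) i : i != j -> delta v i = 0.
Proof. by rewrite /delta; case: (j =P i) => // e; subst; rewrite eqxx. Qed.

Lemma addr1_eq0 (i : int) : (i + 1 == 0) = (i == -1).
Proof. by rewrite addr_eq0. Qed.

Lemma part3 (z : cochain1 K0 d) : cocycle sigma p z ->
  exists (y : Dsp K0 d) (c : DKsp d), cohom sigma iota p z (o, y, c).
Proof.
move=> hz.
have sol : forall i, exists v : 'rV[K0]_(rk d i),
    (p%:R : K0) ^ i *: map_mx sigma v - v = z.1.1 i.
  move=> i; case: (eqVneq i 0) => [-> | hi].
    by have [v hv] := a0sol hz; exists v; rewrite expr0z scale1r.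
  case: (hslope hi) => g fg gf; exists (map_mx g (z.1.1 i)).
  by apply/rowP => j; rewrite !mxE; exact: gf.
pose x : Dsp K0 d := fun i => proj1_sig (constructive_indefinite_description _ (sol i)).
have hx i : phiD sigma p x i - x i = z.1.1 i :=
  proj2_sig (constructive_indefinite_description _ (sol i)).
exists (fun i => z.1.2 i - ND x i), (fun i => z.2 i + toK iota x i).
exists x, (fun i => 0); split; first exact: F0_0.
move=> i; split => /=.
- by rewrite subr0 hx.
- by rewrite subKr.
- by rewrite opprD addrA subrr.
Qed.

Lemma part4 (y : Dsp K0 d) (c : DKsp d) : cocycle sigma p (o, y, c) ->
  Qp_row sigma (y (-1)).
Proof.
move=> hz; have := cocycle_m1 hz; rewrite /= mul0mx => /eqP.
by rewrite eq_sym subr_eq0 => /eqP.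
Qed.

Lemma cocycle_y (y : Dsp K0 d) (c : DKsp d) : cocycle sigma p (o, y, c) ->
  forall i, i + 1 != 0 -> y i = 0.
Proof.
move=> hz i hi; have := hz i; rewrite /= ND_o add0r /phiD pscale_S => /eqP.
rewrite subr_eq0 => /eqP e; exact: (fixed_slope (esym e) hi).
Qed.

Lemma part5 (y : Dsp K0 d) (c : DKsp d) y' c' :
  cohom sigma iota p (o, y, c) (o, y', c') ->
  exists t : 'rV[K0]_(rk d 0), Qp_row sigma t /\ y (-1) - y' (-1) = t *m NmK0.
Proof.
case=> x [f [Ff E]].
have [xnz x0] : (forall i, i != 0 -> x i = 0) /\ Qp_row sigma (x 0).
  apply: fixed_x => i; have [e _ _] := E i; move: e => /=.
  by rewrite subrr => /eqP; rewrite eq_sym subr_eq0 => /eqP.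
exists (x 0); split => //; have [_ e _] := E (-1); exact: e.
Qed.

Lemma part6 (v : 'rV[K0]_(rk d (-1))) : Qp_row sigma v ->
  exists (y : Dsp K0 d) (c : DKsp d), cocycle sigma p (o, y, c) /\ y (-1) = v.
Proof.
move=> hv; exists (delta v), (fun i => 0); split; last exact: delta_eq.
move=> i /=; rewrite ND_o add0r /phiD pscale_S.
case: (eqVneq i (-1)) => [->|hi].
  have -> : (-1 + 1 : int) = 0 by [].
  by rewrite delta_eq expr0z scale1r hv subrr.
by rewrite delta_neq // map_mx0 scaler0 subr0.
Qed.

Lemma part7 (y : Dsp K0 d) (c : DKsp d) : cocycle sigma p (o, y, c) ->
  (exists t : 'rV[K0]_(rk d 0), Qp_row sigma t /\ y (-1) = t *m NmK0) ->
  exists c' : DKsp d, cohom sigma iota p (o, y, c) (o, o, c').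
Proof.
move=> hz [t [ht e]].
exists (fun i => c i + toK iota (delta t) i).
exists (delta t), (fun i => 0); split; first exact: F0_0.
move=> i; split => /=.
- rewrite subrr; case: (eqVneq i 0) => [->|hi].
    by rewrite /phiD delta_eq expr0z scale1r ht subrr.
  by rewrite /phiD delta_neq // map_mx0 scaler0 subrr.
- rewrite subr0; case: (eqVneq i (-1)) => [->|hi].
    by rewrite ND_m1 delta_eq e.
  have hi' : i + 1 != 0 by rewrite addr1_eq0.
  by rewrite /ND delta_neq // mul0mx (cocycle_y hz hi').
- by rewrite opprD addrA subrr.
Qed.

Lemma part8 (y : Dsp K0 d) (c : DKsp d) y' c' :
  cohom sigma iota p (o, y, c) (o, y', c') ->
  exists f : DKsp d, F0 (d:=d) f /\
       (forall i, i != 0 -> c i - c' i = f i) /\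
       exists t : 'rV[K0]_(rk d 0), Qp_row sigma t /\
         c 0 - c' 0 = f 0 + map_mx iota t.
Proof.
case=> x [f [Ff E]].
have [xnz x0] : (forall i, i != 0 -> x i = 0) /\ Qp_row sigma (x 0).
  apply: fixed_x => i; have [e _ _] := E i; move: e => /=.
  by rewrite subrr => /eqP; rewrite eq_sym subr_eq0 => /eqP.
exists f; split => //; split.
  by move=> i hi; have [_ _ ->] := E i; rewrite /toK xnz // map_mx0 subr0.
exists (- x 0); split; first by rewrite /Qp_row map_mxN x0.
by have [_ _ ->] := E 0; rewrite /toK map_mxN.
Qed.
End Main.

Lemma part9 (p : nat) (K0 K : fieldType)
  (sigma : {rmorphism K0 -> K0}) (iota : {rmorphism K0 -> K}) (d d' : datum K)
  (M : dmorph d d') (z z' : cochain1 K0 d) :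
  (cocycle sigma p z -> cocycle sigma p (mapC M z)) /\
  (cohom sigma iota p z z' -> cohom sigma iota p (mapC M z) (mapC M z')).
Proof.
have NM i : map_mx (fun z : int => (z%:~R : K0)) (Nm d i) *m
              map_mx (fun z : int => (z%:~R : K0)) (Mm M i) =
            map_mx (fun z : int => (z%:~R : K0)) (Mm M (i + 1)) *m
              map_mx (fun z : int => (z%:~R : K0)) (Nm d' i).
  by rewrite -!intmxM Mm_N.
have NDM (x : Dsp K0 d) i :
  ND (fun i => x i *m map_mx (fun z : int => (z%:~R : K0)) (Mm M i)) i =
  ND x i *m map_mx (fun z : int => (z%:~R : K0)) (Mm M i).
  by rewrite /ND -!mulmxA NM.
have phiM (x : Dsp K0 d) i :
  phiD sigma p (fun i => x i *m map_mx (fun z : int => (z%:~R : K0)) (Mm M i)) i =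
  phiD sigma p x i *m map_mx (fun z : int => (z%:~R : K0)) (Mm M i).
  by rewrite /phiD map_mx_int scalemxAl.
split.
  move=> hz i /=; rewrite NDM phiM.
  transitivity ((ND z.1.1 i + z.1.2 i - (p%:R : K0) *: phiD sigma p z.1.2 i) *m
     map_mx (fun z : int => (z%:~R : K0)) (Mm M i)); last by rewrite hz mul0mx.
  by rewrite mulmxBl mulmxDl scalemxAl.
case=> x [f [Ff E]].
exists (fun i => x i *m map_mx (fun z : int => (z%:~R : K0)) (Mm M i)).
exists (fun i => f i *m map_mx (fun z : int => (z%:~R : K)) (Mm M i)).
split; first exact: Mm_F0.
move=> i; have [e1 e2 e3] := E i; split => /=.
- by rewrite -mulmxBl e1 mulmxBl phiM.
- by rewrite -mulmxBl e2 NDM.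
- by rewrite -mulmxBl e3 mulmxBl /toK map_mx_int.
Qed.

Theorem proposition4p2 (p : nat) (K0 K : fieldType)
  (sigma : {rmorphism K0 -> K0}) (iota : {rmorphism K0 -> K})
  (hp : prime p) (hchar : [pchar K0] =i pred0) (hsig : bijective sigma)
  (hslope : forall i : int, i != 0 ->
     bijective (fun x : K0 => (p%:R : K0) ^ i * sigma x - x))
  (hcok : forall x : K0, exists a y : K0, sigma a = a /\ x = a + (sigma y - y))
  (hdir : forall a y : K0, sigma a = a -> a = sigma y - y -> a = 0)
  (d : datum K) :
  let Z := @cocycle K0 K sigma p d in
  let H := @cohom K0 K sigma iota p d in
  let o := (fun i => 0) : Dsp K0 d in
  let NmK0 := map_mx (fun z : int => (z%:~R : K0)) (Nm d (-1)) in
  (* first map  D_K/F^0 -> H^1,  c |-> [(0,0,c)] : well defined, injective *)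
  (forall c : DKsp d, Z (o, o, c)) /\
  (forall c c' : DKsp d,
     H (o, o, c) (o, o, c') <-> F0 (d:=d) (fun i => c i - c' i)) /\
  (* every class has a representative (0,y,c) *)
  (forall z, Z z -> exists (y : Dsp K0 d) (c : DKsp d), H z (o, y, c)) /\
  (* for such a representative, y_{-1} lies in T^{-1} (x) Q_p *)
  (forall y c, Z (o, y, c) -> Qp_row sigma (y (-1))) /\
  (* second map H^1 -> (T^{-1}/N T^0) (x) Q_p, [(0,y,c)] |-> [y_{-1}] :
     well defined *)
  (forall y c y' c', Z (o, y, c) -> Z (o, y', c') -> H (o, y, c) (o, y', c') ->
     exists t : 'rV[K0]_(rk d 0), Qp_row sigma t /\ y (-1) - y' (-1) = t *m NmK0) /\
  (* ... surjective *)
  (forall v : 'rV[K0]_(rk d (-1)), Qp_row sigma v ->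
     exists y c, Z (o, y, c) /\ y (-1) = v) /\
  (* ... with kernel the image of the first map (the composite is 0
     since (0,0,c) has y = 0) *)
  (forall y c, Z (o, y, c) ->
     (exists t : 'rV[K0]_(rk d 0), Qp_row sigma t /\ y (-1) = t *m NmK0) ->
     exists c' : DKsp d, H (o, y, c) (o, o, c')) /\
  (* third map H^1 -> D_K/(F^0 + T^0 (x) Q_p), [(0,y,c)] |-> [c] :
     well defined (its composite with the first map is the projection
     by construction) *)
  (forall y c y' c', Z (o, y, c) -> Z (o, y', c') -> H (o, y, c) (o, y', c') ->
     exists f : DKsp d, F0 (d:=d) f /\
       (forall i, i != 0 -> c i - c' i = f i) /\
       exists t : 'rV[K0]_(rk d 0), Qp_row sigma t /\
         c 0 - c' 0 = f 0 + map_mx iota t) /\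
  (* functoriality: a morphism of data induces a map on H^1; the three maps
     above commute with it by their explicit formulas *)
  (forall (d' : datum K) (M : dmorph d d') (z z' : cochain1 K0 d),
     (Z z -> @cocycle K0 K sigma p d' (mapC M z)) /\
     (H z z' -> @cohom K0 K sigma iota p d' (mapC M z) (mapC M z'))).
Proof.
move=> Z H o NmK0; rewrite /Z /H /o /NmK0 {Z H o NmK0}.
split; first by move=> c; apply: part1.
split; first by move=> c c'; apply: part2.
split; first by move=> z hz; apply: part3.
split; first by move=> y c hz; apply: part4 hz.
split; first by move=> y c y' c' _ _ hH; apply: part5 hH.
split; first by move=> v hv; apply: part6.
split; first by move=> y c hz ht; apply: part7.
split; first by move=> y c y' c' _ _ hH; apply: part8 hH.
by move=> d' M z z'; apply: part9.
Qed.
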